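(* Let $n$ be a positive integer and let $X$ have Student's $t$-distribution with $n$ degrees of freedom, i.e. density $f(x)=\frac{\Gamma(\frac{n+1}2)}{\sqrt{n\pi}\,\Gamma(\frac n2)(1+\frac{x^2}n)^{(n+1)/2}}$ on $\mathbb{R}$. Then $$\Pr\{|X|\ge x\}\le x\Big(\frac{n+1}{n+x^2}\Big)^{(n+1)/2}\quad\text{for } x\ge1,\qquad \Pr\{|X|\le x\}\le x\Big(\frac{n+1}{n+x^2}\Big)^{(n+1)/2}\quad\text{for } 0\le x\le1,$$ and the function $x\mapsto x\big(\frac{n+1}{n+x^2}\big)^{(n+1)/2}$ is monotonically increasing on $(0,1)$ and monotonically decreasing on $(1,\infty)$. *)

(* Defs.v *)
From HB Require Import structures.
From mathcomp Require Import all_boot all_order all_algebra.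
From mathcomp Require Import all_classical all_reals all_analysis.
Set Implicit Arguments. Unset Strict Implicit. Unset Printing Implicit Defensive.
Import Order.TTheory GRing.Theory Num.Theory.
Import numFieldNormedType.Exports.
Local Open Scope classical_set_scope.
Local Open Scope ring_scope.

Definition Gamma (R : realType) (s : R) : R :=
  fine (\int[@lebesgue_measure R]_(t in `]0%R, +oo[%classic)
          (powR t (s - 1) * expR (- t))%:E)%E.

Definition student_density (R : realType) (n : nat) (x : R) : R :=
  Gamma ((n%:R + 1) / 2) /
  (Num.sqrt (n%:R * pi) * Gamma (n%:R / 2) *
   powR (1 + x ^+ 2 / n%:R) ((n%:R + 1) / 2)).

Definition is_student_t (R : realType) (d : measure_display)
    (T : measurableType d) (P : probability T R) (X : {RV P >-> R}) (n : nat) :=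
  forall A : set R, measurable A ->
    P (X @^-1` A) = (\int[@lebesgue_measure R]_(t in A) (student_density n t)%:E)%E.

Definition student_bound (R : realType) (n : nat) (x : R) : R :=
  x * powR ((n%:R + 1) / (n%:R + x ^+ 2)) ((n%:R + 1) / 2).

(* Main.v *)
Require Import Defs.
From HB Require Import structures.
From mathcomp Require Import all_boot all_order all_algebra.
From mathcomp Require Import all_classical all_reals all_analysis.
From mathcomp Require Import ring lra.
From mathcomp Require Import measurable_realfun.
Import Order.TTheory GRing.Theory Num.Theory.
Import numFieldNormedType.Exports.
Local Open Scope classical_set_scope.
Local Open Scope ring_scope.

Definition dC (R : realType) (n : nat) : R :=
  Gamma ((n%:R + 1) / 2) / (Num.sqrt (n%:R * pi) * Gamma (n%:R / 2)).

Lemma Gamma_ge0 (R : realType) (s : R) : 0 <= Gamma s.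
Proof.
rewrite /Gamma; apply: fine_ge0; apply: integral_ge0 => t _.
by rewrite lee_fin mulr_ge0 ?powR_ge0 ?expR_ge0.
Qed.

Lemma dC_ge0 (R : realType) n : 0 <= dC R n.
Proof. by rewrite /dC divr_ge0 ?mulr_ge0 ?Gamma_ge0 ?sqrtr_ge0. Qed.

Lemma dens_eq (R : realType) n (t : R) :
  student_density n t = dC R n * (powR (1 + t ^+ 2 / n%:R) ((n%:R + 1) / 2))^-1.
Proof. by rewrite /student_density /dC invfM mulrA. Qed.

Lemma key (R : realType) (n : nat) (x s : R) : (0 < n)%N -> 0 < x ->
  0 <= (x ^+ 2 - 1) * (s ^+ 2 - 1) ->
  x * student_density n (x * s) <= student_bound n x * student_density n s.
Proof.
move=> n0 x0 hxs.
have nR : 0 < n%:R :> R by rewrite ltr0n.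
set a := (n%:R + 1) / 2 : R.
rewrite !dens_eq /student_bound.
set q := fun t : R => 1 + t ^+ 2 / n%:R.
have q0 : forall t, 0 < q t.
  by move=> t; rewrite /q ltr_pwDl // divr_ge0 ?sqr_ge0 ?ltW.
set r := (n%:R + 1) / (n%:R + x ^+ 2).
have nx0 : 0 < n%:R + x ^+ 2 by have := sqr_ge0 x; lra.
have r0 : 0 < r by rewrite /r divr_gt0 //; lra.
rewrite -mulrA ler_pM2l // mulrCA ler_wpM2l ?dC_ge0 //.
have qa : forall t, 0 < q t `^ a by move=> t; apply: powR_gt0.
rewrite -/(q (x * s)) -/(q s).
rewrite ler_pdivlMr // mulrC ler_pdivrMr // -powRM ?(ltW r0) ?(ltW (q0 _)) //.
apply: ge0_ler_powR.
- by rewrite /a divr_ge0 //; lra.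
- by rewrite nnegrE ltW.
- by rewrite nnegrE mulr_ge0 ?ltW.
rewrite -subr_ge0.
have -> : r * q (x * s) - q s = (x ^+ 2 - 1) * (s ^+ 2 - 1) / (n%:R + x ^+ 2).
  rewrite /r /q; field.
  by apply/andP; split; apply/negP => /eqP; lra.
by rewrite divr_ge0 // ltW.
Qed.
Lemma wln (R : realType) (t a b : R) : 0 <= t -> t <= 1 -> 0 < a -> 0 < b ->
  t * ln a + (1 - t) * ln b <= ln (t * a + (1 - t) * b).
Proof.
move=> t0 t1 a0 b0.
have tP : Itv.spec (@Itv.num_sem R) (Itv.Real `[0, 1]%Z) t.
  by rewrite /= /Itv.num_sem /= in_itv /= t0 t1 ger0_real.
have := @concave_ln R (Itv.Def tP) a b a0 b0.
by rewrite !convRE /=.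
Qed.

Lemma L1 (R : realType) (m u w : R) : 0 < m -> 0 < u -> 0 < w ->
  (u / (m + u)) * (ln w - ln u) <= ln (m + w) - ln (m + u).
Proof.
move=> m0 u0 w0.
have mu0 : 0 < m + u by lra.
have mw0 : 0 < m + w by lra.
have := @wln R (m / (m + u)) 1 (w / u).
rewrite ln1 mulr0 add0r.
have -> : 1 - m / (m + u) = u / (m + u) by field; lra.
have -> : m / (m + u) * 1 + u / (m + u) * (w / u) = (m + w) / (m + u).
  by field; apply/andP; split; lra.
rewrite !ln_div ?posrE //; apply.
- by rewrite divr_ge0 // ltW.
- by rewrite ler_pdivrMr // mul1r; lra.
- by [].
- by rewrite divr_gt0.
Qed.

Lemma ln_bound (R : realType) (n : nat) (x : R) : (0 < n)%N -> 0 < x ->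
  ln (student_bound n x) =
  ln x + (n%:R + 1) / 2 * (ln (n%:R + 1) - ln (n%:R + x ^+ 2)).
Proof.
move=> n0 x0.
have nR : 0 < n%:R :> R by rewrite ltr0n.
have nx0 : 0 < n%:R + x ^+ 2 by have := sqr_ge0 x; lra.
rewrite /student_bound lnM ?posrE //; last first.
  by apply: powR_gt0; rewrite divr_gt0 //; lra.
by rewrite ln_powR ln_div ?posrE //; lra.
Qed.

Lemma bound_gt0 (R : realType) (n : nat) (x : R) : (0 < n)%N -> 0 < x ->
  0 < student_bound n x.
Proof.
move=> n0 x0; have nR : 0 < n%:R :> R by rewrite ltr0n.
have nx0 : 0 < n%:R + x ^+ 2 by have := sqr_ge0 x; lra.
rewrite /student_bound mulr_gt0 // powR_gt0 // divr_gt0 //; lra.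
Qed.

Lemma ln_sq (R : realType) (x : R) : 0 < x -> ln (x ^+ 2) = 2 * ln x.
Proof. by move=> x0; rewrite lnXn // mulr_natl. Qed.

Lemma incr01 (R : realType) (n : nat) (a b : R) : (0 < n)%N ->
  0 < a -> a < b -> b < 1 -> student_bound n a < student_bound n b.
Proof.
move=> n0 a0 ab b1.
have nR : 0 < n%:R :> R by rewrite ltr0n.
have b0 : 0 < b by lra.
rewrite -ltr_ln ?posrE ?bound_gt0 // !ln_bound //.
have a20 : 0 < a ^+ 2 by rewrite exprn_gt0.
have b20 : 0 < b ^+ 2 by rewrite exprn_gt0.
have := @L1 R n%:R (b ^+ 2) (a ^+ 2) nR b20 a20.
rewrite !ln_sq //.
have L0 : 0 < ln b - ln a by rewrite subr_gt0 ltr_ln ?posrE.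
set k := b ^+ 2 / (n%:R + b ^+ 2).
have nb0 : 0 < n%:R + b ^+ 2 by lra.
have hk : (n%:R + 1) * k < 1.
  rewrite /k mulrA ltr_pdivrMr // mul1r.
  have : b ^+ 2 < 1 by rewrite expr_lt1 //; lra.
  nra.
move=> H.
set D := ln (n%:R + b ^+ 2) - ln (n%:R + a ^+ 2).
set L := ln b - ln a.
have HD : D <= k * (2 * L) by rewrite /D /L; lra.
have h1 : (n%:R + 1) / 2 * D <= (n%:R + 1) / 2 * (k * (2 * L)).
  by rewrite ler_wpM2l // divr_ge0 //; lra.
have h2 : (n%:R + 1) * k * L < L by rewrite -[ltRHS]mul1r ltr_pM2r.
have e : (n%:R + 1) / 2 * (k * (2 * L)) = (n%:R + 1) * k * L by field.
rewrite /D /L in h1 h2 e.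
lra.
Qed.

Lemma decr1 (R : realType) (n : nat) (a b : R) : (0 < n)%N ->
  1 < a -> a < b -> student_bound n b < student_bound n a.
Proof.
move=> n0 a1 ab.
have nR : 0 < n%:R :> R by rewrite ltr0n.
have a0 : 0 < a by lra.
have b0 : 0 < b by lra.
rewrite -ltr_ln ?posrE ?bound_gt0 // !ln_bound //.
have a20 : 0 < a ^+ 2 by rewrite exprn_gt0.
have b20 : 0 < b ^+ 2 by rewrite exprn_gt0.
have := @L1 R n%:R (a ^+ 2) (b ^+ 2) nR a20 b20.
rewrite !ln_sq //.
have L0 : 0 < ln b - ln a by rewrite subr_gt0 ltr_ln ?posrE.
set k := a ^+ 2 / (n%:R + a ^+ 2).
have na0 : 0 < n%:R + a ^+ 2 by lra.
have hk : 1 < (n%:R + 1) * k.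
  rewrite /k mulrA ltr_pdivlMr // mul1r.
  have : 1 < a ^+ 2 by rewrite expr_gt1 //; lra.
  nra.
move=> H.
set D := ln (n%:R + b ^+ 2) - ln (n%:R + a ^+ 2).
set L := ln b - ln a.
have HD : k * (2 * L) <= D by rewrite /D /L; lra.
have h1 : (n%:R + 1) / 2 * (k * (2 * L)) <= (n%:R + 1) / 2 * D.
  by rewrite ler_wpM2l // divr_ge0 //; lra.
have h2 : L < (n%:R + 1) * k * L by rewrite -[ltLHS]mul1r ltr_pM2r.
have e : (n%:R + 1) / 2 * (k * (2 * L)) = (n%:R + 1) * k * L by field.
rewrite /D /L in h1 h2 e.
lra.
Qed.
Lemma leb_scale (R : realType) (c : R) (hc : 0 < c) (A : set R) :
  measurable A -> (@lebesgue_measure R) A =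
   (c%:E * (@lebesgue_measure R) (( *%R c) @^-1` A))%E.
Proof.
have mf : measurable_fun setT ( *%R c : measurableTypeR R -> measurableTypeR R) by [].
pose nu := measure_function_pushforward__canonical__measure_function_Measure (@lebesgue_measure R) mf.
move=> mA.
have := @lebesgue_measure_unique R (mscale (NngNum (ltW hc)) nu) _ A mA.
apply.
move=> _ [[a b]] _ <-.
rewrite /=; unfold mscale; simpl. rewrite (_ : pushforward _ _ _ = lebesgue_measure (( *%R c) @^-1` `]a, b]%classic)) //.
have -> : ( *%R c) @^-1` `]a, b]%classic = `]a / c, b / c]%classic.
  apply/seteqP; split => x /=; rewrite !in_itv /= ler_pdivlMr // ltr_pdivrMr // [x * c]mulrC //.
rewrite !lebesgue_measure_itv /= !lte_fin ltr_pM2r ?invr_gt0 //.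
case: ifP => _; last by rewrite mule0.
by rewrite -EFinB -EFinM -mulrBl mulrCA mulfV ?gt_eqF // mulr1.
Qed.

Lemma integral_scale (R : realType) (c : R) (hc : 0 < c) (A : set R)
  (mA : measurable A) (f : R -> R) (mf : measurable_fun setT f)
  (f0 : forall t, 0 <= f t) :
  (\int[@lebesgue_measure R]_(t in A) (f t)%:E =
   \int[@lebesgue_measure R]_(s in ( *%R c) @^-1` A) (c * f (c * s))%:E)%E.
Proof.
have mfc : measurable_fun setT ( *%R c : measurableTypeR R -> measurableTypeR R) by [].
pose nu := measure_function_pushforward__canonical__measure_function_Measure (@lebesgue_measure R) mfc.
have mfE : measurable_fun setT (EFin \o f) by apply/measurable_EFinP.
transitivity (\int[mscale (NngNum (ltW hc)) nu]_(t in A) (f t)%:E)%E.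
  apply: eq_measure_integral => B mB _.
  rewrite /=; unfold mscale; simpl. exact: (@leb_scale R c hc B mB).
rewrite ge0_integral_mscale //; last by move=> t _; rewrite lee_fin.
  2: exact: measurable_funS mfE.
rewrite (ge0_integral_pushforward mfc) //; last 2 first.
- exact: measurable_funS mfE.
- by move=> t _; rewrite lee_fin.
have mA' : measurable (( *%R c) @^-1` A).
  by rewrite -[X in measurable X]setTI; apply: (mfc).
rewrite /= -ge0_integralZl_EFin //. all: try (by move=> t _; rewrite lee_fin). 2: exact: ltW. apply/measurable_EFinP; exact: measurable_funS (measurableT_comp mf mfc).
Qed.

Lemma dens_ge0 (R : realType) n (t : R) : 0 <= student_density n t.
Proof. by rewrite dens_eq mulr_ge0 ?dC_ge0 // invr_ge0 powR_ge0. Qed.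

Lemma dens_meas (R : realType) n : measurable_fun setT (@student_density R n).
Proof.
have -> : @student_density R n = ( *%R (dC R n)) \o (fun y : R => powR y (- ((n%:R + 1) / 2)))
    \o (fun t : R => 1 + t ^+ 2 / n%:R).
  by apply/funext => t; rewrite dens_eq /= powRN.
apply: measurableT_comp.
  apply: measurableT_comp => //; exact: measurable_powR.
apply: measurable_funD => //.
apply: measurable_funM => //.
Qed.

Lemma dens_scale_meas (R : realType) n (x : R) :
  measurable_fun setT (fun s : R => student_density n (x * s)).
Proof. apply: (measurableT_comp (dens_meas R n)); exact: mulrl_measurable. Qed.

Theorem corollary9 (R : realType) (d : measure_display) (T : measurableType d)
    (P : probability T R) (X : {RV P >-> R}) (n : nat) :
  (0 < n)%N -> is_student_t X n ->
  [/\ (forall x : R, 1 <= x ->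
         (P [set w | (x <= `|X w|)%R] <= (student_bound n x)%:E)%E),
      (forall x : R, 0 <= x <= 1 ->
         (P [set w | (`|X w| <= x)%R] <= (student_bound n x)%:E)%E),
      {in `]0 : R, 1[ &, {homo @student_bound R n : a b / a < b}} &
      {in `]1 : R, +oo[ &, {homo @student_bound R n : a b / a < b >-> b < a}}].
Proof.
move=> n0 hX.
have f0 := @dens_ge0 R n.
have mf := @dens_meas R n.
have Ptot : (\int[@lebesgue_measure R]_(t in setT) (student_density n t)%:E = 1)%E.
  by rewrite -(hX setT measurableT) preimage_setT probability_setT.
have gen : forall (x : R) (S : set R), 0 < x -> measurable S ->
    (forall s, S (x * s) -> 0 <= (x ^+ 2 - 1) * (s ^+ 2 - 1)) ->
    (P (X @^-1` S) <= (student_bound n x)%:E)%E.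
  move=> x S x0 mS hS.
  have g0 : 0 <= student_bound n x by apply: ltW; apply: bound_gt0.
  have mS' : measurable (( *%R x) @^-1` S).
    by rewrite -[X in measurable X]setTI; exact: (@mulrl_measurable R setT x measurableT S mS).
  rewrite hX // (@integral_scale R x x0 S mS _ mf f0).
  apply: (@le_trans _ _ (\int[@lebesgue_measure R]_(s in ( *%R x) @^-1` S)
      (student_bound n x * student_density n s)%:E)%E).
    apply: ge0_le_integral => //.
    - by move=> s _; rewrite lee_fin mulr_ge0 // ltW.
    - apply/measurable_EFinP; apply: measurable_funM => //.
      by apply: measurable_funTS; exact: dens_scale_meas.
    - apply/measurable_EFinP; apply: measurable_funM => //.
      exact: measurable_funS mf.
    - by move=> s Ss; rewrite lee_fin; apply: key => //; apply: hS.
  under eq_integral do rewrite EFinM.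
  rewrite ge0_integralZl_EFin //; last 2 first.
  - by move=> s _; rewrite lee_fin.
  - by apply/measurable_EFinP; exact: measurable_funS mf.
  rewrite -[leRHS]mule1 -Ptot lee_wpmul2l ?lee_fin //.
  apply: ge0_subset_integral => //.
  - by apply/measurable_EFinP.
  - by move=> s _; rewrite lee_fin.
split.
- move=> x x1.
  have x0 : 0 < x by lra.
  have mS : measurable [set t : R | x <= `|t|].
    have -> : [set t : R | x <= `|t|] = setT `&` ((fun t : R => `|t|) @^-1` `[x, +oo[%classic).
      by apply/seteqP; split => t /=; rewrite in_itv /= andbT //; case.
    exact: (@normr_measurable R setT measurableT _ (measurable_itv _)).
  apply: (gen x [set t : R | x <= `|t|] x0 mS) => s /=.
  rewrite normrM gtr0_norm // => hs.
  have s1 : 1 <= `|s| by rewrite -(ler_pM2l x0) mulr1.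
  have : 1 <= s ^+ 2 by rewrite -real_normK ?num_real // expr_ge1.
  move=> h; apply: mulr_ge0; rewrite subr_ge0 //.
  by rewrite expr_ge1 // ltW // (lt_le_trans ltr01).
- move=> x /andP[x0 x1].
  have [->|xn0] := eqVneq x 0.
    have -> : [set w | `|X w| <= 0] = X @^-1` [set 0].
      by apply/seteqP; split => w /=; rewrite normr_le0 => /eqP.
    by rewrite hX // integral_set1 /student_bound mul0r.
  have xp : 0 < x by rewrite lt_neqAle eq_sym xn0 x0.
  have mS : measurable [set t : R | `|t| <= x].
    have -> : [set t : R | `|t| <= x] = setT `&` ((fun t : R => `|t|) @^-1` `]-oo, x]%classic).
      by apply/seteqP; split => t /=; rewrite in_itv /= //; case.
    exact: (@normr_measurable R setT measurableT _ (measurable_itv _)).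
  apply: (gen x [set t : R | `|t| <= x] xp mS) => s /=.
  rewrite normrM gtr0_norm // => hs.
  have s1 : `|s| <= 1 by rewrite -(ler_pM2l xp) mulr1.
  have hs2 : s ^+ 2 <= 1 by rewrite -real_normK ?num_real // expr_le1.
  have hx2 : x ^+ 2 <= 1 by rewrite expr_le1.
  by apply: mulr_le0; rewrite subr_le0.
- move=> a b; rewrite !in_itv /= => /andP[a0 a1] /andP[b0 b1] ab.
  exact: incr01.
- move=> a b; rewrite !in_itv /= !andbT => a1 b1 ab.
  exact: decr1.
Qed.
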